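(* Let $B$ be a nonzero proper Borel ideal of $S=k[x_1,\dots,x_n]$ generated in degrees at most $d$. For $0\le s\le d-1$ let $M_s$ be the set of monomials of degree $s$ that are minimal monomial generators of $\operatorname{trunc}_s(B)$ and do not lie in $B$, and for $m\in M_s$ let $Z_m=\{x_j: mx_j\notin\operatorname{trunc}_{s+1}(B)\}$. Then, as $k$-vector spaces, \[S/B=\bigoplus_{s=0}^{d-1}\ \bigoplus_{m\in M_s} m\cdot k[Z_m],\] i.e. the set of monomials of $S$ not in $B$ is the disjoint union over $s$ and $m\in M_s$ of the sets $\{mu: u \text{ a monomial in the variables } Z_m\}$, and none of these monomials lies in $B$.
   Context: For a monomial $m$ with factorization $x_{i_1}\cdots x_{i_r}$ ($i_1\le\dots\le i_r$), $\operatorname{trunc}_d(m)=x_{i_1}\cdots x_{i_d}$ if $d\le r$ and $=m$ if $d>r$; for a monomial ideal $I$, $\operatorname{trunc}_d(I)$ is the ideal generated by the $d$-truncations of the monomials of $I$; in particular $\operatorname{trunc}_0(B)=(1)$. A Borel ideal is a monomial ideal closed under Borel moves $m\mapsto m\frac{x_{i_1}}{x_{j_1}}\cdots\frac{x_{i_s}}{x_{j_s}}$ ($i_t<j_t$, all $x_{j_t}\mid m$). For a monomial $f$ and a set $Z$ of variables, $f\cdot k[Z]$ is the $k$-span of $\{fu : u$ a monomial in $Z\}$. *)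

(* Defs.v *)
(* Monomials of k[x_1,...,x_n] are exponent vectors
   'I_n -> nat; variable x_{i+1} corresponds to index i : 'I_n. *)
From mathcomp Require Import all_boot.
Set Implicit Arguments. Unset Strict Implicit. Unset Printing Implicit Defensive.

Definition mono (n : nat) := {ffun 'I_n -> nat}.

Definition mone n : mono n := [ffun _ => 0].
Definition mmul n (m u : mono n) : mono n := [ffun i => m i + u i].
Definition mvar n (j : 'I_n) : mono n := [ffun i => (i == j) : nat].
Definition mdvd n (m m' : mono n) : bool := [forall i, m i <= m' i].
Definition mdeg n (m : mono n) : nat := \sum_(i < n) m i.

(* factorization x_{i_1} ... x_{i_r} with i_1 <= ... <= i_r, as a sequence *)
Definition mfactors n (m : mono n) : seq 'I_n :=
  flatten [seq nseq (m i) i | i <- enum 'I_n].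
Definition mono_of_seq n (s : seq 'I_n) : mono n := [ffun i => count_mem i s].
(* trunc_d(m) = x_{i_1} ... x_{i_d} (or m if d > r) *)
Definition mtrunc n (d : nat) (m : mono n) : mono n :=
  mono_of_seq (take d (mfactors m)).

(* A monomial ideal is identified with its set of monomials:
   a set closed under multiplication by arbitrary monomials. *)
Definition monideal n (I : mono n -> Prop) : Prop :=
  forall m u, I m -> I (mmul m u).

Definition itrunc n (d : nat) (I : mono n -> Prop) : mono n -> Prop :=
  fun w => exists2 m, I m & mdvd (mtrunc d m) w.

Definition mingen n (J : mono n -> Prop) (m : mono n) : Prop :=
  J m /\ forall m', mdvd m' m -> J m' -> m' = m.

Definition gen_in_deg_le n (I : mono n -> Prop) (d : nat) : Prop :=
  forall m, I m -> exists2 g, I g & (mdvd g m /\ mdeg g <= d).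

Definition borel_move n (m : mono n) (i j : 'I_n) : mono n :=
  [ffun k => if k == i then (m k).+1 else if k == j then (m k).-1 else m k].

Definition borel n (I : mono n -> Prop) : Prop :=
  monideal I /\
  forall m (i j : 'I_n), I m -> (i < j)%N -> 0 < m j -> I (borel_move m i j).

Definition Mset n (B : mono n -> Prop) (s : nat) (m : mono n) : Prop :=
  mdeg m = s /\ mingen (itrunc s B) m /\ ~ B m.

Definition Zset n (B : mono n -> Prop) (s : nat) (m : mono n) (j : 'I_n) : Prop :=
  ~ itrunc s.+1 B (mmul m (mvar j)).

Definition mono_in n (Z : 'I_n -> Prop) (u : mono n) : Prop :=
  forall i, u i != 0 -> Z i.

(* Main.v *)
Require Import Defs.
From mathcomp Require Import all_boot.
From Stdlib Require Import Classical.
Set Implicit Arguments. Unset Strict Implicit. Unset Printing Implicit Defensive.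

Section M.
Variable n : nat.
Implicit Types (m a b g u w : mono n) (s t : seq 'I_n) (i j k : 'I_n) (p q : nat).

Definition rI : rel 'I_n := fun i j => (nat_of_ord i <= nat_of_ord j)%N.
Lemma rI_trans : transitive rI.
Proof. move=> x y z; exact: leq_trans. Qed.
Lemma rI_anti : antisymmetric rI.
Proof. move=> x y /andP[h1 h2]; apply/val_inj/eqP; rewrite eqn_leq; exact/andP. Qed.

Lemma mmulC a b : mmul a b = mmul b a.
Proof. by apply/ffunP=> i; rewrite !ffunE addnC. Qed.
Lemma mmulA a b g : mmul a (mmul b g) = mmul (mmul a b) g.
Proof. by apply/ffunP=> i; rewrite !ffunE addnA. Qed.
Lemma mmul1m a : mmul (mone n) a = a.
Proof. by apply/ffunP=> i; rewrite !ffunE. Qed.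
Lemma mmulm1 a : mmul a (mone n) = a.
Proof. by apply/ffunP=> i; rewrite !ffunE addn0. Qed.
Lemma mmulI a b g : mmul a b = mmul a g -> b = g.
Proof. move=> /ffunP h; apply/ffunP=> i; move: (h i); rewrite !ffunE; exact: addnI. Qed.
Lemma mvar_inj (i j : 'I_n) : mvar i = mvar j -> i = j.
Proof. move=> /ffunP/(_ i); rewrite !ffunE eqxx; by case: eqP. Qed.

Lemma mdvd_refl a : mdvd a a.
Proof. by apply/forallP. Qed.
Lemma mdvd_trans a b g : mdvd a b -> mdvd b g -> mdvd a g.
Proof. move=> /forallP h1 /forallP h2; apply/forallP=> i; exact: leq_trans (h1 i) (h2 i). Qed.
Lemma mdvd_mulr a b : mdvd a (mmul a b).
Proof. apply/forallP=> i; rewrite ffunE; exact: leq_addr. Qed.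
Lemma mdvd_mull a b : mdvd a (mmul b a).
Proof. rewrite mmulC; exact: mdvd_mulr. Qed.
Lemma mdvd_mul2l a b g : mdvd b g -> mdvd (mmul a b) (mmul a g).
Proof. move=> /forallP h; apply/forallP=> i; rewrite !ffunE leq_add2l; exact: h. Qed.
Lemma mdvd1 a : mdvd (mone n) a.
Proof. by apply/forallP=> i; rewrite ffunE. Qed.

Lemma ideal_dvd (B : mono n -> Prop) a b : monideal B -> B a -> mdvd a b -> B b.
Proof.
move=> hB Ba /forallP h.
have -> : b = mmul a [ffun i => b i - a i].
  by apply/ffunP=> i; rewrite !ffunE subnKC.
exact: hB.
Qed.

Lemma sum_lt (f f' : 'I_n -> nat) :
  (forall i, f i <= f' i) -> (exists j, f j < f' j) ->
  (\sum_(i < n) f i < \sum_(i < n) f' i)%N.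
Proof.
move=> h [j hj]; rewrite (bigD1 j) //= [X in _ < X](bigD1 j) //=.
rewrite -addSn; apply: leq_add => //; apply: leq_sum => i _; exact: h.
Qed.

Lemma mdeg_le a b : mdvd a b -> mdeg a <= mdeg b.
Proof. move=> /forallP h; apply: leq_sum => i _; exact: h. Qed.

Lemma mdvd_eq a b : mdvd a b -> mdeg b <= mdeg a -> a = b.
Proof.
move=> h hd; apply/ffunP=> i; apply/eqP; rewrite eqn_leq (forallP h i) /=.
rewrite leqNgt; apply/negP=> hi.
have := sum_lt (f := a) (f' := b) (fun i => forallP h i) (ex_intro _ i hi).
by rewrite ltnNge hd.
Qed.

Lemma mdeg_mul a b : mdeg (mmul a b) = mdeg a + mdeg b.
Proof. rewrite /mdeg -big_split /=; apply: eq_bigr => i _; by rewrite ffunE. Qed.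
Lemma mdeg_var (j : 'I_n) : mdeg (mvar j) = 1%N.
Proof.
rewrite /mdeg (bigD1 j) //= ffunE eqxx big1 // => i hi; by rewrite ffunE (negbTE hi).
Qed.
Lemma mdeg1 : mdeg (mone n) = 0%N.
Proof. by rewrite /mdeg big1 // => i _; rewrite ffunE. Qed.
Lemma mdeg0 a : mdeg a = 0%N -> a = mone n.
Proof. move=> h; apply/esym/mdvd_eq; [exact: mdvd1| by rewrite h mdeg1]. Qed.

Lemma mos_cat s t : mono_of_seq (s ++ t) = mmul (mono_of_seq s) (mono_of_seq t).
Proof. by apply/ffunP=> i; rewrite !ffunE count_cat. Qed.
Lemma mos1 j : mono_of_seq [:: j] = mvar j.
Proof. by apply/ffunP=> i; rewrite !ffunE /= addn0 eq_sym. Qed.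
Lemma mos0 : mono_of_seq [::] = mone n.
Proof. by apply/ffunP=> i; rewrite !ffunE. Qed.
Lemma mos_gt0 s i : (0 < mono_of_seq s i) = (i \in s).
Proof. by rewrite ffunE -has_count has_pred1. Qed.
Lemma mdeg_mos s : mdeg (mono_of_seq s) = size s.
Proof.
elim: s => [|x s IH]; first by rewrite mos0 mdeg1.
by rewrite -cat1s mos_cat mdeg_mul mos1 mdeg_var IH.
Qed.

Lemma count_flat (f : 'I_n -> nat) (l : seq 'I_n) i : uniq l ->
  count_mem i (flatten [seq nseq (f x) x | x <- l]) = if i \in l then f i else 0.
Proof.
elim: l => [|x l IH] //= /andP[xl ul]; rewrite count_cat IH // count_nseq /= in_cons.
case: (eqVneq i x) => [->|hix] /=.
  by rewrite (negbTE xl) addn0 mul1n.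
by rewrite mul0n.
Qed.

Lemma mos_F m : mono_of_seq (mfactors m) = m.
Proof. apply/ffunP=> i; rewrite ffunE count_flat ?enum_uniq // mem_enum //. Qed.

Lemma pw_flat (f : 'I_n -> nat) (l : seq 'I_n) : pairwise (fun i j : 'I_n => (i < j)%N) l ->
  pairwise rI (flatten [seq nseq (f x) x | x <- l]).
Proof.
elim: l => [|x l IH] //= /andP[hx hl]; rewrite pairwise_cat IH // andbT; apply/andP; split.
  apply/allrelP=> y z; rewrite mem_nseq => /andP[_ /eqP ->] /flatten_mapP[w wl].
  rewrite mem_nseq => /andP[_ /eqP ->]; move/allP: hx => /(_ w wl); exact: ltnW.
elim: (f x) => //= k ->; rewrite andbT; apply/allP=> y; rewrite mem_nseq => /andP[_ /eqP ->]; exact: leqnn.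
Qed.

Lemma F_sorted m : pairwise rI (mfactors m).
Proof.
apply: pw_flat; rewrite -sorted_pairwise; last by move=> x y z; exact: ltn_trans.
have := iota_ltn_sorted 0 n; rewrite -val_enum_ord.
by rewrite sorted_map.
Qed.

Lemma F_mos s : pairwise rI s -> mfactors (mono_of_seq s) = s.
Proof.
move=> hs; apply: (sorted_eq rI_trans rI_anti).
- by rewrite sorted_pairwise ?F_sorted //; exact: rI_trans.
- by rewrite sorted_pairwise //; exact: rI_trans.
apply/allP=> x _; apply/eqP; have := congr1 (fun m => m x) (mos_F (mono_of_seq s)).
by rewrite !ffunE.
Qed.

Definition le_supp a b := forall i j, 0 < a i -> 0 < b j -> (nat_of_ord i <= nat_of_ord j)%N.

Lemma supp_mul a b i : (0 < mmul a b i) = (0 < a i) || (0 < b i).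
Proof. by rewrite ffunE addn_gt0. Qed.
Lemma supp_var i j : (0 < mvar j i) = (i == j).
Proof. by rewrite ffunE; case: eqP. Qed.
Lemma mem_F m i : (i \in mfactors m) = (0 < m i).
Proof. by rewrite -mos_gt0 mos_F. Qed.
Lemma size_F m : size (mfactors m) = mdeg m.
Proof. by rewrite -mdeg_mos mos_F. Qed.

Lemma le_supp_mos s t : allrel rI s t -> le_supp (mono_of_seq s) (mono_of_seq t).
Proof. move=> /allrelP h i j; rewrite !mos_gt0; exact: h. Qed.

Lemma F_mul a b : le_supp a b -> mfactors (mmul a b) = mfactors a ++ mfactors b.
Proof.
move=> h; rewrite -{1}(mos_F a) -{1}(mos_F b) -mos_cat F_mos //.
rewrite pairwise_cat !F_sorted !andbT; apply/allrelP=> x y; rewrite !mem_F; exact: h.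
Qed.

Lemma trT p a b : mdeg a = p -> le_supp a b -> mtrunc p (mmul a b) = a.
Proof. by move=> ha h; rewrite /mtrunc F_mul // take_size_cat ?mos_F // size_F. Qed.

Lemma trT2 p a b : p <= mdeg a -> le_supp a b -> mtrunc p (mmul a b) = mtrunc p a.
Proof. by move=> ha h; rewrite /mtrunc F_mul // takel_cat // size_F. Qed.

Lemma trTo p g : mdeg g <= p -> mtrunc p g = g.
Proof. by move=> h; rewrite /mtrunc take_oversize ?mos_F // size_F. Qed.

Lemma F_trunc p g : mfactors (mtrunc p g) = take p (mfactors g).
Proof.
rewrite /mtrunc F_mos //; rewrite -sorted_pairwise; last exact: rI_trans.
by apply: take_sorted; rewrite sorted_pairwise ?F_sorted //; exact: rI_trans.
Qed.

Lemma trT3 p q g : p <= q -> mtrunc p (mtrunc q g) = mtrunc p g.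
Proof. by move=> h; rewrite {1}/mtrunc F_trunc take_takel. Qed.

Lemma mdeg_trunc p g : mdeg (mtrunc p g) = minn p (mdeg g).
Proof. by rewrite /mtrunc mdeg_mos size_take_min size_F. Qed.

Lemma dvd_trunc p g : mdvd (mtrunc p g) g.
Proof.
apply/forallP=> i; rewrite -{2}(mos_F g) !ffunE -{2}(cat_take_drop p (mfactors g)).
by rewrite count_cat leq_addr.
Qed.

Lemma trunc0 g : mtrunc 0 g = mone n.
Proof. by rewrite /mtrunc take0 mos0. Qed.

Lemma split_tr p g : p < mdeg g -> exists k R,
  [/\ g = mmul (mmul (mtrunc p g) (mvar k)) R,
      le_supp (mmul (mtrunc p g) (mvar k)) R &
      forall i, 0 < mtrunc p g i -> (nat_of_ord i <= nat_of_ord k)%N].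
Proof.
move=> ht; have hs := F_sorted g; rewrite -size_F in ht.
case e: (drop p (mfactors g)) => [|k rest].
  by move: (size_drop p (mfactors g)); rewrite e /= => /eqP; rewrite eq_sym subn_eq0 leqNgt ht.
have eg : mfactors g = (take p (mfactors g) ++ [:: k]) ++ rest by rewrite -catA /= -e cat_take_drop.
have := hs; rewrite eg pairwise_cat pairwise_cat => /and3P[h1 /and3P[h2 _ _] _].
exists k, (mono_of_seq rest); split.
- by rewrite -{1}(mos_F g) eg !mos_cat mos1.
- by rewrite /mtrunc -mos1 -mos_cat; exact: le_supp_mos.
- move=> i; rewrite /mtrunc mos_gt0 => hi; move/allrelP: h2 => /(_ i k hi); rewrite inE eqxx; exact.
Qed.

Lemma BM a j k : k != j -> borel_move (mmul (mvar j) a) k j = mmul (mvar k) a.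
Proof.
move=> hkj; apply/ffunP=> i; rewrite !ffunE.
case: (eqVneq i k) => [->|hik]; first by rewrite ?eqxx ?(negbTE hkj).
by case: (eqVneq i j) => [->|hij]; rewrite ?eqxx.
Qed.

Lemma decomp g j : 0 < g j -> exists h, g = mmul (mvar j) h.
Proof.
move=> hj; exists [ffun i => g i - (i == j)]; apply/ffunP=> i; rewrite !ffunE subnKC //.
by case: eqP => [->|].
Qed.

Lemma rearr m k R : mmul (mmul m (mvar k)) R = mmul (mvar k) (mmul m R).
Proof. by rewrite (mmulC m) -mmulA. Qed.

Lemma dvd_mulvar g m j : mdvd g (mmul m (mvar j)) ->
  mdvd g m \/ exists g0, g = mmul (mvar j) g0 /\ mdvd g0 m.
Proof.
move=> /forallP h; case: (leqP (g j) (m j)) => hj.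
  left; apply/forallP=> i; case: (eqVneq i j) => [->//|hij].
  by move: (h i); rewrite !ffunE (negbTE hij) addn0.
right; have [g0 eg] := decomp (leq_ltn_trans (leq0n _) hj); exists g0; split => //.
apply/forallP=> i; move: (h i); rewrite eg !ffunE addnC; case: (i == j) => /=.
  by rewrite /= ?add1n ?addn1 ltnS.
by rewrite !addn0.
Qed.

Variable B : mono n -> Prop.

Lemma borelA g m R j k p : borel B -> B g -> g = mmul (mmul m (mvar k)) R ->
  le_supp (mmul m (mvar j)) R -> (nat_of_ord j <= nat_of_ord k)%N -> mdeg m = p ->
  itrunc p.+1 B (mmul m (mvar j)).
Proof.
move=> [hI hB] Bg eg hle hjk hm.
have dg : mdeg (mmul m (mvar j)) = p.+1 by rewrite mdeg_mul mdeg_var hm addn1.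
case: (eqVneq j k) => [ejk|njk].
  exists g => //; rewrite eg -ejk trT //; exact: mdvd_refl.
have ltjk : (nat_of_ord j < nat_of_ord k)%N by rewrite ltn_neqAle hjk andbT; apply: contra njk => /eqP h; apply/eqP/val_inj.
have gk : 0 < g k by rewrite eg !supp_mul supp_var eqxx orbT.
exists (borel_move g j k); first exact: hB.
by rewrite eg rearr BM // -rearr trT //; exact: mdvd_refl.
Qed.

Definition Zs p m := Zset B p m.

Lemma Mset_gen p m : Mset B p m -> exists g, [/\ B g, mtrunc p g = m & p < mdeg g].
Proof.
move=> [hm [[[g Bg hg] hmin] nBm]].
have e : mtrunc p g = m by apply: hmin => //; exists g => //; exact: mdvd_refl.
exists g; split => //; rewrite ltnNge; apply/negP => hd.
by apply: nBm; rewrite -e trTo.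
Qed.

Lemma Mset_info p m j : borel B -> Mset B p m -> Zset B p m j ->
  forall i, 0 < m i -> (nat_of_ord i <= nat_of_ord j)%N.
Proof.
move=> hB hM hZ i hi; have [g [Bg eg dg]] := Mset_gen hM.
have [k [R [e1 e2 e3]]] := split_tr dg; rewrite eg in e1 e2 e3.
have hmk := e3 _ hi.
rewrite leqNgt; apply/negP => hji; apply: hZ.
apply: (borelA hB Bg e1) => //; last by case: hM.
  move=> x y; rewrite supp_mul supp_var => /orP[hx|/eqP ->] hy.
    by apply: e2 => //; rewrite supp_mul hx.
  apply: leq_trans (ltnW (leq_trans hji hmk)) _; apply: e2 => //.
  by rewrite supp_mul supp_var eqxx orbT.
exact: ltnW (leq_trans hji hmk).
Qed.

Lemma u_dec u : 0 < mdeg u -> exists j0 R, u = mmul (mvar j0) R /\ le_supp (mvar j0) R.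
Proof.
move=> h; have [k [R [e1 e2 _]]] := split_tr h; move: e1 e2; rewrite trunc0 mmul1m => e1 e2.
by exists k, R.
Qed.

Lemma mu_struct p m u : borel B -> Mset B p m -> mono_in (Zset B p m) u -> 0 < mdeg u ->
  exists j0 R, [/\ mmul m u = mmul (mmul m (mvar j0)) R, le_supp (mmul m (mvar j0)) R,
     Zset B p m j0 & mtrunc p.+1 (mmul m u) = mmul m (mvar j0)].
Proof.
move=> hB hM hu du; have [j0 [R [eu hle]]] := u_dec du.
have Zj0 : Zset B p m j0 by apply: hu; rewrite eu ffunE ffunE eqxx.
have hle2 : le_supp (mmul m (mvar j0)) R.
  move=> x y; rewrite supp_mul supp_var => /orP[hx|/eqP ->] hy; last first.
    by apply: hle => //; rewrite supp_var.
  apply: (Mset_info hB hM _ hx); apply: hu; rewrite eu ffunE -lt0n addn_gt0 hy orbT //.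
exists j0, R; split => //; first by rewrite eu mmulA.
rewrite eu mmulA trT //; rewrite mdeg_mul mdeg_var addn1; by case: hM => ->.
Qed.

Lemma partA p m u : borel B -> Mset B p m -> mono_in (Zset B p m) u -> ~ B (mmul m u).
Proof.
move=> hB hM hu; case: (posnP (mdeg u)) => du.
  by rewrite (mdeg0 du) mmulm1; case: hM => _ [_].
have [j0 [R [e1 e2 Zj0 e4]]] := mu_struct hB hM hu du.
move=> Bmu; apply: Zj0; exists (mmul m u) => //; rewrite e4; exact: mdvd_refl.
Qed.

Lemma mu_le p m u : borel B -> Mset B p m -> mono_in (Zset B p m) u -> le_supp m u.
Proof. move=> hB hM hu i j hi hj; apply: (Mset_info hB hM _ hi); apply: hu; by rewrite -lt0n. Qed.

Lemma partC_lt p q m u m' u' : borel B -> p < q -> Mset B p m -> mono_in (Zset B p m) u ->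
  Mset B q m' -> mono_in (Zset B q m') u' -> mmul m u = mmul m' u' -> False.
Proof.
move=> hB hpq hM hu hM' hu' e.
have le' := mu_le hB hM' hu'.
have dm : mdeg m = p by case: hM.
have dm' : mdeg m' = q by case: hM'.
case: (posnP (mdeg u)) => du.
  have := congr1 (@mdeg n) e; rewrite !mdeg_mul du dm dm' addn0 => ep.
  by move: hpq; rewrite ep ltnNge leq_addr.
have [j0 [R [e1 e2 Zj0 e4]]] := mu_struct hB hM hu du.
have [g' [Bg' eg' _]] := Mset_gen hM'.
apply: Zj0; exists g' => //.
rewrite -e4 e trT2 ?dm' // -eg' trT3 //; exact: mdvd_refl.
Qed.

Lemma partC p q m u m' u' : borel B -> Mset B p m -> mono_in (Zset B p m) u ->
  Mset B q m' -> mono_in (Zset B q m') u' -> mmul m u = mmul m' u' -> [/\ p = q, m = m' & u = u'].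
Proof.
move=> hB hM hu hM' hu' e.
case: (ltngtP p q) => hpq.
- by case: (partC_lt hB hpq hM hu hM' hu' e).
- by case: (partC_lt hB hpq hM' hu' hM hu (esym e)).
subst q.
have em : m = m'.
  have dm : mdeg m = p by case: hM.
  have dm' : mdeg m' = p by case: hM'.
  by rewrite -(trT dm (mu_le hB hM hu)) e (trT dm' (mu_le hB hM' hu')).
by subst m'; split => //; exact: mmulI e.
Qed.

Definition mu_exc a g0 := \sum_(i < n) (g0 i - a i).

Lemma L_step p g a k R g0 : borel B -> g = mmul (mmul a (mvar k)) R ->
  le_supp (mmul a (mvar k)) R -> (forall i, 0 < a i -> (nat_of_ord i <= nat_of_ord k)%N) ->
  mdeg a = p -> mdvd a g ->
  ~~ mdvd g0 a -> B g0 -> mdvd g0 g -> mdeg g0 <= p ->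
  exists g1, [/\ B g1, mdvd g1 g, mdeg g1 <= p & mu_exc a g1 < mu_exc a g0].
Proof.
move=> [hI hB] e1 e2 e3 da hag ndv Bg0 hdv hdeg.
move/forallPn: ndv => [j]; rewrite -ltnNge => hj.
have [i hi] : exists i, g0 i < a i.
  case: (boolP [exists i, g0 i < a i]) => [/existsP //|/existsPn hne].
  have : mdeg a < mdeg g0.
    by apply: sum_lt; [move=> x; have := hne x; rewrite -leqNgt | exists j].
  by rewrite da ltnNge hdeg.
have hik : (nat_of_ord i <= nat_of_ord k)%N by apply: e3; exact: leq_ltn_trans (leq0n _) hi.
have hkj : (nat_of_ord k <= nat_of_ord j)%N.
  have := forallP hdv j; rewrite e1 !ffunE => hg.
  have : 0 < (j == k) + R j.
    rewrite lt0n; apply/negP => /eqP h0; move: hg; rewrite -addnA h0 addn0 => hg.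
    by move: (leq_trans hj hg); rewrite ltnn.
  rewrite addn_gt0 => /orP[hjk|hR].
    by move: hjk; case: eqP => [-> _|].
  by apply: e2 => //; rewrite supp_mul supp_var eqxx orbT.
have nij : i != j by apply/eqP => eij; move: hi; rewrite eij => hi; move: (ltn_trans hi hj); rewrite ltnn.
have lij : (nat_of_ord i < nat_of_ord j)%N.
  rewrite ltn_neqAle (leq_trans hik hkj) andbT; apply: contra nij => /eqP hh; apply/eqP; exact: val_inj.
have gj : 0 < g0 j by exact: leq_ltn_trans (leq0n _) hj.
have [h eh] := decomp gj.
have g1e : borel_move g0 i j = mmul (mvar i) h by rewrite eh BM.
exists (borel_move g0 i j); split.
- exact: hB.
- apply/forallP=> l; rewrite g1e !ffunE.
  case: (eqVneq l i) => [->|nli].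
    apply: leq_trans (forallP hag i); move: hi; rewrite eh !ffunE (negbTE nij) ?eqxx /= add0n add1n; by [].
  rewrite /= add0n; apply: leq_trans (forallP hdv l); rewrite eh ffunE; exact: leq_addl.
- by rewrite g1e mdeg_mul mdeg_var -(mdeg_var j) -mdeg_mul -eh.
- apply: sum_lt => [l|]; last exists j.
    rewrite g1e eh !ffunE; case: (eqVneq l i) => [->|nli] /=.
      move: hi; rewrite eh !ffunE (negbTE nij) /= add0n add1n => hi'.
      by rewrite (_ : (h i).+1 - a i = 0) //; apply/eqP; rewrite subn_eq0.
    by rewrite leq_sub2r // add0n leq_addl.
  rewrite g1e eh !ffunE eq_sym (negbTE nij) ?eqxx /= add0n add1n.
  move: hj; rewrite eh !ffunE ?eqxx /= add1n ltnS => hj'.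
  by rewrite subSn.
Qed.

Lemma lemL p g g0 : borel B -> B g -> B g0 -> mdvd g0 g -> mdeg g0 <= p -> B (mtrunc p g).
Proof.
move=> hB Bg Bg0 hdv hdeg; case: (leqP (mdeg g) p) => hd; first by rewrite trTo.
have [k [R [e1 e2 e3]]] := split_tr hd.
have da : mdeg (mtrunc p g) = p by rewrite mdeg_trunc; apply/minn_idPl/ltnW.
have hag := dvd_trunc p g.
move: (mtrunc p g) e1 e2 e3 da hag => a e1 e2 e3 da hag.
suff H : forall N g0, mu_exc a g0 <= N -> B g0 -> mdvd g0 g -> mdeg g0 <= p -> B a by exact: H _ g0 (leqnn _) Bg0 hdv hdeg.
elim=> [|N IH] g1 hN Bg1 hdv1 hdeg1; case: (boolP (mdvd g1 a)) => hda.
- exact: ideal_dvd (proj1 hB) Bg1 hda.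
- have [g2 [_ _ _ hlt]] := L_step hB e1 e2 e3 da hag hda Bg1 hdv1 hdeg1.
  by move: (leq_trans hlt hN); rewrite ltn0.
- exact: ideal_dvd (proj1 hB) Bg1 hda.
- have [g2 [Bg2 hdv2 hdeg2 hlt]] := L_step hB e1 e2 e3 da hag hda Bg1 hdv1 hdeg1.
  exact: (IH g2 (leq_trans hlt hN) Bg2 hdv2 hdeg2).
Qed.

Lemma borelZ p m j k : borel B -> mdeg m = p ->
  (forall i, 0 < m i -> (nat_of_ord i <= nat_of_ord k)%N) -> (nat_of_ord k <= nat_of_ord j)%N ->
  itrunc p.+1 B (mmul m (mvar j)) -> itrunc p.+1 B (mmul m (mvar k)).
Proof.
move=> hB dm hmk hkj [g Bg hdv].
case: (leqP (mdeg g) p.+1) => hd.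
- rewrite trTo // in hdv; case: (dvd_mulvar hdv) => [hgm|[g0 [eg hg0]]].
    by exists g => //; rewrite trTo //; exact: mdvd_trans hgm (mdvd_mulr _ _).
  case: (eqVneq k j) => [ekj|nkj]; first by exists g => //; rewrite trTo // ekj.
  have lkj : (nat_of_ord k < nat_of_ord j)%N.
    by rewrite ltn_neqAle hkj andbT; apply: contra nkj => /eqP hh; apply/eqP; exact: val_inj.
  have gj : 0 < g j by rewrite eg supp_mul supp_var eqxx.
  exists (borel_move g k j); first exact: (proj2 hB).
  rewrite eg BM // trTo; last by rewrite mdeg_mul mdeg_var -(mdeg_var j) -mdeg_mul -eg.
  rewrite (mmulC m); exact: mdvd_mul2l.
have e : mtrunc p.+1 g = mmul m (mvar j).
  apply: mdvd_eq hdv _; rewrite mdeg_trunc (minn_idPl (ltnW hd)) mdeg_mul mdeg_var dm addn1 //.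
have hd' : p < mdeg g by exact: ltnW hd.
have [k' [R [e1 e2 e3]]] := split_tr hd'.
have da : mdeg (mtrunc p g) = p by rewrite mdeg_trunc; apply/minn_idPl/ltnW.
have e' : mtrunc p.+1 g = mmul (mtrunc p g) (mvar k').
  by rewrite [in LHS]e1 trT // mdeg_mul mdeg_var da addn1.
move: (mtrunc p g) e1 e2 e3 da e' => a e1 e2 e3 da e'.
have eam : mmul a (mvar k') = mmul m (mvar j) by rewrite -e' e.
have ea : a = m.
  have h1 : le_supp a (mvar k') by move=> x y hx; rewrite supp_var => /eqP ->; exact: e3.
  have h2 : le_supp m (mvar j) by move=> x y hx; rewrite supp_var => /eqP ->; exact: leq_trans (hmk x hx) hkj.
  by rewrite -(trT da h1) eam (trT dm h2).
subst a; have ek : k' = j by apply: mvar_inj; exact: mmulI eam.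
subst k'.
apply: (borelA (j:=k) hB Bg e1) => //.
move=> x y; rewrite supp_mul supp_var => /orP[hx|/eqP ->] hy.
  by apply: e2 => //; rewrite supp_mul hx.
apply: leq_trans hkj _; apply: e2 => //; by rewrite supp_mul supp_var eqxx orbT.
Qed.

Lemma maxlemma (P : nat -> Prop) (N : nat) : P 0 ->
  exists x, [/\ x <= N, P x & forall y, x < y -> y <= N -> ~ P y].
Proof.
move=> P0; elim: N => [|N [x [hs Ps hm]]].
  by exists 0; split => // y h1 h2; move: (leq_trans h1 h2).
case: (classic (P N.+1)) => hP.
  by exists N.+1; split => // y h1 h2; move: (leq_trans h1 h2); rewrite ltnn.
exists x; split => //; first exact: leq_trans hs (leqnSn _).
move=> y h1 h2; case: (ltngtP y N.+1) h2 => // [h3|->] _; last exact: hP.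
exact: hm.
Qed.

Lemma partB d w : borel B -> (exists m, B m) -> gen_in_deg_le B d -> ~ B w ->
  exists x m u, [/\ x < d, Mset B x m, mono_in (Zset B x m) u & w = mmul m u].
Proof.
move=> hB [m0 Bm0] hgen nBw.
have [x [hs Ps hmax]] := @maxlemma (fun x => itrunc x B (mtrunc x w)) (mdeg w)
  (ex_intro2 _ _ m0 Bm0 (eq_ind_r (fun x => mdvd x _) (mdvd1 _) (trunc0 m0))).
have dm : mdeg (mtrunc x w) = x by rewrite mdeg_trunc; apply/minn_idPl.
have mw : mdvd (mtrunc x w) w := dvd_trunc x w.
have nBm : ~ B (mtrunc x w) := fun Bm => nBw (ideal_dvd (proj1 hB) Bm mw).
have hM : Mset B x (mtrunc x w).
  split => //; split => //; split => // m' hm' [g Bg hg].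
  case: (leqP (mdeg g) x) => hdg.
    rewrite trTo // in hg; exfalso; apply: nBm; exact: ideal_dvd (proj1 hB) Bg (mdvd_trans hg hm').
  have e : mtrunc x g = mtrunc x w.
    by apply: mdvd_eq (mdvd_trans hg hm') _; rewrite dm mdeg_trunc (minn_idPl (ltnW hdg)).
  apply: (mdvd_eq hm'); rewrite -e; exact: mdeg_le hg.
have sd : x < d.
  rewrite ltnNge; apply/negP => hds; case: Ps => g Bg hg.
  have [g0 Bg0 [hg0 dg0]] := hgen g Bg.
  by apply: nBm; apply: ideal_dvd (proj1 hB) (lemL hB Bg Bg0 hg0 (leq_trans dg0 hds)) hg.
exists x, (mtrunc x w).
case: (ltngtP x (mdeg w)) hs => // [hsw|esw] _; last first.
  exists (mone n); split => //; first by move=> i; rewrite ffunE.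
  by rewrite mmulm1 trTo // esw.
have [k [R [e1 e2 e3]]] := split_tr hsw.
have e' : mtrunc x.+1 w = mmul (mtrunc x w) (mvar k).
  by rewrite [in LHS]e1 trT // mdeg_mul mdeg_var dm addn1.
have hZ : forall j, (nat_of_ord k <= nat_of_ord j)%N -> Zset B x (mtrunc x w) j.
  move=> j hkj hZ; apply: (hmax x.+1 (ltnSn x) hsw); rewrite e'.
  exact: borelZ hB dm e3 hkj hZ.
exists (mmul (mvar k) R); split => //.
  move=> j; rewrite -lt0n supp_mul supp_var => /orP[/eqP ->|hR]; first exact: hZ.
  by apply: hZ; apply: e2 => //; rewrite supp_mul supp_var eqxx orbT.
by rewrite mmulA -e1.
Qed.
End M.

Theorem theorem4p1 (n d : nat) (B : mono n -> Prop) :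
  borel B ->
  (exists m, B m) ->
  ~ B (mone n) ->
  gen_in_deg_le B d ->
  [/\ (* none of the monomials m u lies in B *)
      (forall s m u, s < d -> Mset B s m -> mono_in (Zset B s m) u ->
         ~ B (mmul m u)),
      (* every monomial not in B is of the form m u *)
      (forall w, ~ B w ->
         exists s m u, [/\ s < d, Mset B s m, mono_in (Zset B s m) u &
                          w = mmul m u]) &
      (* the union is disjoint *)
      (forall s m u s' m' u', s < d -> Mset B s m -> mono_in (Zset B s m) u ->
         s' < d -> Mset B s' m' -> mono_in (Zset B s' m') u' ->
         mmul m u = mmul m' u' -> [/\ s = s', m = m' & u = u'])].
Proof.
move=> hB hex _ hgen; split.
- move=> s m u _ hM hu; exact: partA hB hM hu.
- move=> w nBw; exact: partB hB hex hgen nBw.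
- move=> s m u s' m' u' _ hM hu _ hM' hu' e; exact: partC hB hM hu hM' hu' e.
Qed.
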